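(* Let $N\ge 1$, let $\lambda_1,\dots,\lambda_N$ be distinct real numbers and $\mu_1,\dots,\mu_N$ nonzero real constants. On $\mathbb{R}^{6N}$ with coordinates $\phi_{ij},\psi_{ij}$ ($i=1,2,3$, $j=1,\dots,N$) consider the nonlinearized spatial system \[ \begin{pmatrix}\phi_{1j}\\ \phi_{2j}\\ \phi_{3j}\end{pmatrix}_x=U(\tilde u,\lambda_j)\begin{pmatrix}\phi_{1j}\\ \phi_{2j}\\ \phi_{3j}\end{pmatrix},\qquad \begin{pmatrix}\psi_{1j}\\ \psi_{2j}\\ \psi_{3j}\end{pmatrix}_x=-U(\tilde u,\lambda_j)^T\begin{pmatrix}\psi_{1j}\\ \psi_{2j}\\ \psi_{3j}\end{pmatrix},\quad j=1,\dots,N, \] where $\tilde u=(\tilde q,\tilde r)^T$ with $\tilde q=\sqrt2(\langle P_1,BQ_2\rangle+\langle P_2,BQ_3\rangle)$, $\tilde r=\sqrt2(\langle P_2,BQ_1\rangle+\langle P_3,BQ_2\rangle)$. Then the functions \[\bar F_j=\sum_{i=1}^3\phi_{ij}\psi_{ij},\qquad 1\le j\le N,\] are integrals of motion of this system (constant along its solutions), they are in involution, $\{\bar F_k,\bar F_l\}=0$ for all $1\le k,l\le N$, with respect to the Poisson bracket below, and they are independent (their gradients are linearly independent at every point) over the region \[\Omega=\Big\{(\phi,\psi)\in\mathbb{R}^{6N}:\ \sum_{i=1}^3(\phi_{ij}^2+\psi_{ij}^2)\neq 0\ \text{for all } 1\le j\le N\Big\}.\]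
   Context: For $u=(q,r)^T$ and a parameter $\lambda$, $U(u,\lambda)=\begin{pmatrix}-2\lambda&\sqrt2 q&0\\ \sqrt2 r&0&\sqrt2 q\\ 0&\sqrt2 r&2\lambda\end{pmatrix}$. $B=\mathrm{diag}(\mu_1,\dots,\mu_N)$, $P_i=(\phi_{i1},\dots,\phi_{iN})^T$, $Q_i=(\psi_{i1},\dots,\psi_{iN})^T$ for $i=1,2,3$, and $\langle\cdot,\cdot\rangle$ is the standard inner product on $\mathbb{R}^N$. The Poisson bracket on $\mathbb{R}^{6N}$ is $\{F,G\}=\sum_{i=1}^3\big(\langle \tfrac{\partial F}{\partial Q_i},B^{-1}\tfrac{\partial G}{\partial P_i}\rangle-\langle \tfrac{\partial F}{\partial P_i},B^{-1}\tfrac{\partial G}{\partial Q_i}\rangle\big)$, where $\frac{\partial}{\partial P_i}=(\frac{\partial}{\partial\phi_{i1}},\dots,\frac{\partial}{\partial\phi_{iN}})^T$ and similarly for $Q_i$. *)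

(* Defs.v *)
From Stdlib Require Import Reals Lra.
From Coquelicot Require Import Coquelicot.
Open Scope R_scope.

(* Indices are 0-based: i in {0,1,2} stands for i = 1,2,3 of the paper,
   j in {0,...,N-1} stands for j = 1,...,N. *)

Fixpoint rsum (n : nat) (f : nat -> R) : R :=
  match n with
  | O => 0
  | S m => rsum m f + f m
  end.

(* a point of R^{6N}: phi i j = phi_{ij}, psi i j = psi_{ij} *)
Definition state := ((nat -> nat -> R) * (nat -> nat -> R))%type.

Definition Umat (q r lam : R) (i k : nat) : R :=
  match i, k with
  | 0, 0 => - 2 * lam
  | 0, 1 => sqrt 2 * q
  | 1, 0 => sqrt 2 * r
  | 1, 2 => sqrt 2 * q
  | 2, 1 => sqrt 2 * r
  | 2, 2 => 2 * lam
  | _, _ => 0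
  end.

(* <X, B Y> with B = diag(mu_1..mu_N) *)
Definition ipB (N : nat) (mu : nat -> R) (X Y : nat -> R) : R :=
  rsum N (fun j => X j * mu j * Y j).

Definition qt (N : nat) (mu : nat -> R) (s : state) : R :=
  sqrt 2 * (ipB N mu (fst s 0%nat) (snd s 1%nat) + ipB N mu (fst s 1%nat) (snd s 2%nat)).
Definition rt (N : nat) (mu : nat -> R) (s : state) : R :=
  sqrt 2 * (ipB N mu (fst s 1%nat) (snd s 0%nat) + ipB N mu (fst s 2%nat) (snd s 1%nat)).

Definition Fbar (j : nat) (s : state) : R :=
  rsum 3 (fun i => fst s i j * snd s i j).

Definition upd (f : nat -> nat -> R) (i j : nat) (t : R) : nat -> nat -> R :=
  fun a b => if andb (Nat.eqb a i) (Nat.eqb b j) then t else f a b.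

Definition dphi (F : state -> R) (i j : nat) (s : state) : R :=
  Derive (fun t => F (upd (fst s) i j t, snd s)) (fst s i j).
Definition dpsi (F : state -> R) (i j : nat) (s : state) : R :=
  Derive (fun t => F (fst s, upd (snd s) i j t)) (snd s i j).

(* Poisson bracket
   {F,G} = sum_i ( <dF/dQ_i, B^{-1} dG/dP_i> - <dF/dP_i, B^{-1} dG/dQ_i> ) *)
Definition pbracket (N : nat) (mu : nat -> R) (F G : state -> R) (s : state) : R :=
  rsum 3 (fun i => rsum N (fun j =>
    dpsi F i j s * / mu j * dphi G i j s - dphi F i j s * / mu j * dpsi G i j s)).

Definition Omega (N : nat) (s : state) : Prop :=
  forall j, (j < N)%nat ->
    rsum 3 (fun i => fst s i j ^ 2 + snd s i j ^ 2) <> 0.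

Definition grads_independent (N : nat) (F : nat -> state -> R) (s : state) : Prop :=
  forall c : nat -> R,
    (forall i k, (i < 3)%nat -> (k < N)%nat ->
       rsum N (fun j => c j * dphi (F j) i k s) = 0 /\
       rsum N (fun j => c j * dpsi (F j) i k s) = 0) ->
    forall j, (j < N)%nat -> c j = 0.

Definition is_solution (N : nat) (lam mu : nat -> R)
    (ph ps : R -> nat -> nat -> R) (a b : R) : Prop :=
  forall x, a < x < b ->
    forall i j, (i < 3)%nat -> (j < N)%nat ->
      is_derive (fun y => ph y i j) x
        (rsum 3 (fun k => Umat (qt N mu (ph x, ps x)) (rt N mu (ph x, ps x)) (lam j) i k
                          * ph x k j)) /\
      is_derive (fun y => ps y i j) x
        (rsum 3 (fun k => - Umat (qt N mu (ph x, ps x)) (rt N mu (ph x, ps x)) (lam j) k i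
                          * ps x k j)).

(* Main.v *)
Require Import Defs.
From Stdlib Require Import Reals Lra Lia.
From Coquelicot Require Import Coquelicot.
Open Scope R_scope.

Lemma dpsi_F (k i j : nat) (s : state) : (i < 3)%nat ->
  dpsi (Fbar k) i j s = if Nat.eqb k j then fst s i k else 0.
Proof.
  intros Hi. unfold dpsi, Fbar. apply is_derive_unique.
  destruct s as [p q]; simpl fst; simpl snd.
  destruct i as [|[|[|i]]]; try lia;
  destruct (Nat.eqb k j) eqn:E; cbn [rsum]; unfold upd; cbn [Nat.eqb andb]; rewrite ?E;
  auto_derive; auto; ring.
Qed.

Lemma dphi_F (k i j : nat) (s : state) : (i < 3)%nat ->
  dphi (Fbar k) i j s = if Nat.eqb k j then snd s i k else 0.
Proof.
  intros Hi. unfold dphi, Fbar. apply is_derive_unique.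
  destruct s as [p q]; simpl fst; simpl snd.
  destruct i as [|[|[|i]]]; try lia;
  destruct (Nat.eqb k j) eqn:E; cbn [rsum]; unfold upd; cbn [Nat.eqb andb]; rewrite ?E;
  auto_derive; auto; ring.
Qed.

Lemma rsum_ext n f g : (forall j, (j < n)%nat -> f j = g j) -> rsum n f = rsum n g.
Proof.
  induction n; simpl; intros H; auto.
  rewrite IHn by (intros; apply H; lia). rewrite H by lia. auto.
Qed.

Lemma rsum_zero n f : (forall j, (j < n)%nat -> f j = 0) -> rsum n f = 0.
Proof.
  induction n; simpl; intros H; auto.
  rewrite IHn by (intros; apply H; lia). rewrite H by lia. ring.
Qed.

Lemma rsum_delta n k (c : nat -> R) x : (k < n)%nat ->
  rsum n (fun j => c j * (if Nat.eqb j k then x else 0)) = c k * x.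
Proof.
  induction n; intros Hk; [lia|]. simpl.
  destruct (Nat.eq_dec k n) as [->|Hne].
  - rewrite Nat.eqb_refl. rewrite rsum_zero. ring.
    intros j Hj. destruct (Nat.eqb j n) eqn:E; [apply Nat.eqb_eq in E; lia| ring].
  - rewrite IHn by lia. destruct (Nat.eqb n k) eqn:E; [apply Nat.eqb_eq in E; lia| ring].
Qed.

Lemma deriv_val_eq (f : R -> R) x l l' : is_derive f x l -> l = l' -> is_derive f x l'.
Proof. intros H ->; exact H. Qed.

Theorem theorem3p1 (N : nat) (lam mu : nat -> R)
  (HN : (1 <= N)%nat)
  (Hlam : forall j k, (j < N)%nat -> (k < N)%nat -> j <> k -> lam j <> lam k)
  (Hmu : forall j, (j < N)%nat -> mu j <> 0) :
  (* integrals of motion *)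
  (forall (ph ps : R -> nat -> nat -> R) (a b : R),
     is_solution N lam mu ph ps a b ->
     forall j x y, (j < N)%nat -> a < x < b -> a < y < b ->
       Fbar j (ph x, ps x) = Fbar j (ph y, ps y)) /\
  (* involution *)
  (forall k l (s : state), (k < N)%nat -> (l < N)%nat ->
     pbracket N mu (Fbar k) (Fbar l) s = 0) /\
  (* independence over Omega *)
  (forall s : state, Omega N s -> grads_independent N Fbar s).
Proof.
  split; [|split].
  - intros ph ps a b Hsol j x y Hj Hx Hy.
    assert (HD : forall z, a < z < b ->
      is_derive (fun y => Fbar j (ph y, ps y)) z 0).
    { intros z Hz.
      destruct (Hsol z Hz 0%nat j ltac:(lia) Hj) as [D0 E0].
      destruct (Hsol z Hz 1%nat j ltac:(lia) Hj) as [D1 E1].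
      destruct (Hsol z Hz 2%nat j ltac:(lia) Hj) as [D2 E2].
      unfold Fbar; cbn [rsum fst snd].
      set (qq := qt N mu (ph z, ps z)) in *.
      set (rr := rt N mu (ph z, ps z)) in *.
      cbn [rsum Umat] in D0, D1, D2, E0, E1, E2.
      assert (HH := is_derive_plus _ _ _ _ _
          (is_derive_plus _ _ _ _ _
            (is_derive_plus _ _ _ _ _ (is_derive_const 0 z)
              (is_derive_mult _ _ _ _ _ D0 E0 Rmult_comm))
            (is_derive_mult _ _ _ _ _ D1 E1 Rmult_comm))
          (is_derive_mult _ _ _ _ _ D2 E2 Rmult_comm)).
      eapply deriv_val_eq; [exact HH|].
      simpl. unfold plus, mult, zero; simpl. ring. }
    assert (Hin : forall t, Rmin x y <= t <= Rmax x y -> a < t < b).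
    { intros t [H1 H2]. unfold Rmin, Rmax in *.
      destruct (Rle_dec x y); lra. }
    destruct (MVT_gen (fun y => Fbar j (ph y, ps y)) x y (fun _ => 0)) as [c [_ Hc]].
    + intros t Ht. apply HD, Hin. lra.
    + intros t Ht. apply continuity_pt_filterlim.
      apply (ex_derive_continuous (fun y => Fbar j (ph y, ps y))).
      eexists. apply HD, Hin, Ht.
    + simpl in Hc. lra.
  - intros k l s Hk Hl. unfold pbracket.
    apply rsum_zero; intros i Hi. apply rsum_zero; intros j Hj.
    rewrite dpsi_F, dphi_F, dphi_F, dpsi_F by lia.
    destruct (Nat.eqb k j) eqn:E1; destruct (Nat.eqb l j) eqn:E2;
      try (apply Nat.eqb_eq in E1; apply Nat.eqb_eq in E2; subst); ring.
  - intros s HO c Hc j Hj.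
    destruct (Req_dec (c j) 0) as [|Hcj]; auto. exfalso.
    apply (HO j Hj).
    assert (Z : forall i, (i < 3)%nat -> fst s i j = 0 /\ snd s i j = 0).
    { intros i Hi. destruct (Hc i j Hi Hj) as [H1 H2].
      rewrite (rsum_ext _ _ (fun m => c m * (if Nat.eqb m j then snd s i j else 0))) in H1.
      2:{ intros m Hm. rewrite dphi_F by lia.
          destruct (Nat.eqb m j) eqn:E; auto. apply Nat.eqb_eq in E; subst; auto. }
      rewrite (rsum_ext _ _ (fun m => c m * (if Nat.eqb m j then fst s i j else 0))) in H2.
      2:{ intros m Hm. rewrite dpsi_F by lia.
          destruct (Nat.eqb m j) eqn:E; auto. apply Nat.eqb_eq in E; subst; auto. }
      rewrite rsum_delta in H1, H2 by auto.
      split.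
      + destruct (Rmult_integral _ _ H2); [contradiction|auto].
      + destruct (Rmult_integral _ _ H1); [contradiction|auto]. }
    destruct (Z 0%nat ltac:(lia)) as [A0 B0].
    destruct (Z 1%nat ltac:(lia)) as [A1 B1].
    destruct (Z 2%nat ltac:(lia)) as [A2 B2].
    cbn [rsum]. rewrite A0, B0, A1, B1, A2, B2. ring.
Qed.
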